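(* Let $H\in\mathbb{R}^{n\times n}$ and $M\in\mathbb{R}^{m\times m}$ be symmetric positive semidefinite, $A\in\mathbb{R}^{m\times n}$, $b\in\mathbb{R}^m$, $c,q,r\in\mathbb{R}^n$. Assume $(x,y,z)$ satisfies $Hx+c-A^Ty-z=0$ and $Ax+My-b=0$. Let $l$ be an index and $\mathcal{B},\mathcal{N}$ index sets such that $\mathcal{B}$, $\{l\}$, $\mathcal{N}$ are pairwise disjoint with union $\{1,\dots,n\}$, and $x_{\mathcal{N}}+q_{\mathcal{N}}=0$, $z_{\mathcal{B}}+r_{\mathcal{B}}=0$. If $(\Delta x,\Delta y,\Delta z)$ satisfies $H\Delta x-A^T\Delta y-\Delta z=0$, $A\Delta x+M\Delta y=0$, $\Delta x_{\mathcal{N}}=0$, $\Delta z_{\mathcal{B}}=0$, then for all $\alpha\in\mathbb{R}$ the functions \[ f_P(x,y)=\tfrac12x^THx+\tfrac12y^TMy+c^Tx+r^Tx,\qquad f_D(x,y,z)=-\tfrac12x^THx-\tfrac12y^TMy+b^Ty-q^Tz \] satisfy \[ f_P(x+\alpha\Delta x,y+\alpha\Delta y)=f_P(x,y)+\Delta x_l(z_l+r_l)\alpha+\tfrac12\Delta x_l\Delta z_l\alpha^2, \] \[ f_D(x+\alpha\Delta x,y+\alpha\Delta y,z+\alpha\Delta z)=f_D(x,y,z)-\Delta z_l(x_l+q_l)\alpha-\tfrac12\Delta x_l\Delta z_l\alpha^2. \]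
   Context: For an index set $S$ and a vector $w$, $w_S$ denotes the subvector of components of $w$ with indices in $S$. *)

(* Defs.v *)
From HB Require Import structures.
From mathcomp Require Import all_boot all_order all_algebra.
From mathcomp Require Import reals.
Set Implicit Arguments. Unset Strict Implicit. Unset Printing Implicit Defensive.
Import Order.TTheory GRing.Theory Num.Theory.
Local Open Scope ring_scope.

Definition dotv (R : realType) (n : nat) (u v : 'cV[R]_n) : R := (u^T *m v) 0 0.

Definition qform (R : realType) (n : nat) (H : 'M[R]_n) (x : 'cV[R]_n) : R :=
  (x^T *m H *m x) 0 0.

Definition psd (R : realType) (n : nat) (H : 'M[R]_n) : Prop :=
  H^T = H /\ forall v : 'cV[R]_n, 0 <= qform H v.

Definition fP (R : realType) (n m : nat) (H : 'M[R]_n) (M : 'M[R]_m)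
  (c r : 'cV[R]_n) (x : 'cV[R]_n) (y : 'cV[R]_m) : R :=
  2^-1 * qform H x + 2^-1 * qform M y + dotv c x + dotv r x.

Definition fD (R : realType) (n m : nat) (H : 'M[R]_n) (M : 'M[R]_m)
  (b : 'cV[R]_m) (q : 'cV[R]_n) (x : 'cV[R]_n) (y : 'cV[R]_m) (z : 'cV[R]_n) : R :=
  - (2^-1 * qform H x) - 2^-1 * qform M y + dotv b y - dotv q z.

(* Main.v *)
Require Import Defs.
From HB Require Import structures.
From mathcomp Require Import all_boot all_order all_algebra.
From mathcomp Require Import reals.
From mathcomp Require Import ring.
Import Order.TTheory GRing.Theory Num.Theory.
Local Open Scope ring_scope.

Set Implicit Arguments. Unset Strict Implicit.
Section H.
Variables (R : realType) (n : nat).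

Lemma dotvE (u v : 'cV[R]_n) : dotv u v = \sum_i u i 0 * v i 0.
Proof. by rewrite /dotv !mxE; apply: eq_bigr => i _; rewrite mxE. Qed.

Lemma dotvC (u v : 'cV[R]_n) : dotv u v = dotv v u.
Proof. by rewrite !dotvE; apply: eq_bigr => i _; rewrite mulrC. Qed.

Lemma dotvDr (u v w : 'cV[R]_n) : dotv u (v + w) = dotv u v + dotv u w.
Proof. by rewrite /dotv mulmxDr mxE. Qed.

Lemma dotvDl (u v w : 'cV[R]_n) : dotv (v + w) u = dotv v u + dotv w u.
Proof. by rewrite !(dotvC _ u) dotvDr. Qed.

Lemma dotvNr (u v : 'cV[R]_n) : dotv u (- v) = - dotv u v.
Proof. by rewrite /dotv mulmxN mxE. Qed.

Lemma dotvNl (u v : 'cV[R]_n) : dotv (- v) u = - dotv v u.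
Proof. by rewrite !(dotvC _ u) dotvNr. Qed.

Lemma dotvZr (a : R) (u v : 'cV[R]_n) : dotv u (a *: v) = a * dotv u v.
Proof. by rewrite /dotv -scalemxAr mxE. Qed.

Lemma dotvZl (a : R) (u v : 'cV[R]_n) : dotv (a *: v) u = a * dotv v u.
Proof. by rewrite !(dotvC _ u) dotvZr. Qed.

Lemma qformE (P : 'M[R]_n) (u : 'cV[R]_n) : qform P u = dotv u (P *m u).
Proof. by rewrite /qform /dotv mulmxA. Qed.

End H.

Lemma dotv_mul (R : realType) (k n : nat) (P : 'M[R]_(k, n)) (u : 'cV[R]_k) (v : 'cV[R]_n) :
  dotv u (P *m v) = dotv (P^T *m u) v.
Proof. by rewrite /dotv trmx_mul trmxK mulmxA. Qed.

Lemma sum_single (R : realType) (n : nat) (l : 'I_n) (f : 'I_n -> R) :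
  (forall i, i != l -> f i = 0) -> \sum_i f i = f l.
Proof.
move=> h; rewrite (bigD1 l) //= big1 ?addr0 // => i /h //.
Qed.

Theorem proposition11 (R : realType) (n m : nat)
  (H : 'M[R]_n) (M : 'M[R]_m) (A : 'M[R]_(m, n)) (b : 'cV[R]_m)
  (c q r : 'cV[R]_n) (x : 'cV[R]_n) (y : 'cV[R]_m) (z : 'cV[R]_n)
  (l : 'I_n) (B N : {set 'I_n})
  (dx : 'cV[R]_n) (dy : 'cV[R]_m) (dz : 'cV[R]_n) :
  psd H -> psd M ->
  H *m x + c - A^T *m y - z = 0 ->
  A *m x + M *m y - b = 0 ->
  [disjoint B & [set l]] -> [disjoint B & N] -> [disjoint [set l] & N] ->
  B :|: [set l] :|: N = [set: 'I_n] ->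
  (forall i, i \in N -> x i 0 + q i 0 = 0) ->
  (forall i, i \in B -> z i 0 + r i 0 = 0) ->
  H *m dx - A^T *m dy - dz = 0 ->
  A *m dx + M *m dy = 0 ->
  (forall i, i \in N -> dx i 0 = 0) ->
  (forall i, i \in B -> dz i 0 = 0) ->
  forall alpha : R,
    fP H M c r (x + alpha *: dx) (y + alpha *: dy)
      = fP H M c r x y + dx l 0 * (z l 0 + r l 0) * alpha
        + 2^-1 * dx l 0 * dz l 0 * alpha ^+ 2
    /\
    fD H M b q (x + alpha *: dx) (y + alpha *: dy) (z + alpha *: dz)
      = fD H M b q x y z - dz l 0 * (x l 0 + q l 0) * alpha
        - 2^-1 * dx l 0 * dz l 0 * alpha ^+ 2.
Proof.
move=> [HT _] [MT _] e1 e2 _ _ _ cov hN hB e3 e4 hdN hdB a.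
have BN : forall i, i != l -> (i \in B) || (i \in N).
  by move=> i il; move: (in_setT i); rewrite -cov !inE (negbTE il) orbF.
have ez : z = H *m x + c - A^T *m y.
  by apply/eqP; rewrite eq_sym -subr_eq0 e1.
have eb : b = A *m x + M *m y.
  by apply/eqP; rewrite eq_sym -subr_eq0 e2.
have edz : dz = H *m dx - A^T *m dy.
  by apply/eqP; rewrite eq_sym -subr_eq0 e3.
have eMd : M *m dy = - (A *m dx).
  by apply/eqP; rewrite -addr_eq0 addrC e4.
have L1 : dotv dx (z + r) = dx l 0 * (z l 0 + r l 0).
  rewrite dotvE (@sum_single _ _ l) ?mxE // => i /BN /orP [iB|iN].
    by rewrite !mxE hB // mulr0.
  by rewrite hdN // mul0r.
have L2 : dotv dx dz = dx l 0 * dz l 0.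
  rewrite dotvE (@sum_single _ _ l) ?mxE // => i /BN /orP [iB|iN].
    by rewrite hdB // mulr0.
  by rewrite hdN // mul0r.
have L3 : dotv dz (x + q) = dz l 0 * (x l 0 + q l 0).
  rewrite dotvE (@sum_single _ _ l) ?mxE // => i /BN /orP [iB|iN].
    by rewrite hdB // mul0r.
  by rewrite !mxE hN // mulr0.
have sH : forall u v, dotv u (H *m v) = dotv v (H *m u).
  by move=> u v; rewrite dotv_mul HT dotvC.
have sM : forall u v, dotv u (M *m v) = dotv v (M *m u).
  by move=> u v; rewrite dotv_mul MT dotvC.
rewrite dotvDr in L1; rewrite dotvDr in L3.
rewrite {1}ez !dotvDr dotvNr in L1.
rewrite {1}edz dotvDr dotvNr in L2.
have K1 : dotv dy (M *m y) = - dotv (A^T *m y) dx.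
  by rewrite sM eMd dotvNr dotv_mul.
have K2 : dotv dy (M *m dy) = - dotv (A^T *m dy) dx.
  by rewrite eMd dotvNr dotv_mul.
have K3 : dotv b dy = dotv (A^T *m dy) x + dotv y (M *m dy).
  by rewrite eb dotvDl (dotvC (A *m x)) dotv_mul (dotvC (M *m y)) sM.
have K4 : dotv dz x = dotv dx (H *m x) - dotv (A^T *m dy) x.
  by rewrite edz dotvDl dotvNl dotvC sH.
rewrite (dotvC dx (A^T *m y)) (dotvC dx (A^T *m dy)) (dotvC dx c) (dotvC dx r) in L1 L2.
have E1 : dotv dx (H *m x) = dx l 0 * (z l 0 + r l 0) - dotv c dx
    + dotv (A^T *m y) dx - dotv r dx by rewrite -L1; ring.
have E2 : dotv dx (H *m dx) = dx l 0 * dz l 0 + dotv (A^T *m dy) dx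
    by rewrite -L2; ring.
have E3 : dotv dz q = dz l 0 * (x l 0 + q l 0) - dotv dz x
    by rewrite -L3; ring.
rewrite /fP /fD !qformE !mulmxDr -!scalemxAr !(dotvDr, dotvDl, dotvZr, dotvZl).
rewrite (sH x dx) (sM y dy) (dotvC q dz) E3 K4 K3 K1 K2 E1 E2 eMd dotvNr (dotv_mul A y dx).
split; field; rewrite ?pnatr_eq0 //.
Qed.
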